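(* The law $\mathrm{y}\diamond(\mathrm{x}\diamond(\mathrm{y}\diamond(\mathrm{y}\diamond\mathrm{y})))\simeq\mathrm{x}$ does not imply the law $\mathrm{x}\simeq(\mathrm{x}\diamond\mathrm{x})\diamond(\mathrm{x}\diamond(\mathrm{x}\diamond\mathrm{x}))$.
   Context: A magma is a set with a binary operation $\diamond$; it satisfies a law if the identity holds for all assignments of variables. A law implies another if every magma satisfying the first satisfies the second. *)

(* Defs.v *)
Definition law1 {M : Type} (op : M -> M -> M) : Prop :=
  forall x y : M, op y (op x (op y (op y y))) = x.

Definition law2 {M : Type} (op : M -> M -> M) : Prop :=
  forall x : M, x = op (op x x) (op x (op x x)).

(* Main.v *)
Require Import Defs.
From Stdlib Require Import Lia.

Inductive tree : Type := Lf : tree | Nd : tree -> tree -> tree.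

Fixpoint sz (t : tree) : nat :=
  match t with Lf => 1 | Nd a b => S (sz a + sz b) end.

Definition teq (a b : tree) : {a = b} + {a <> b}.
Proof. decide equality. Defined.

Definition op (a b : tree) : tree :=
  match b with
  | Nd x (Nd a1 (Nd a2 a3)) =>
      match teq a a1, teq a a2, teq a a3 with
      | left _, left _, left _ => x
      | _, _, _ => Nd a b
      end
  | _ => Nd a b
  end.

Lemma op_yy y : op y y = Nd y y.
Proof.
  unfold op at 1. destruct y as [|x [|a1 [|a2 a3]]]; auto.
  destruct (teq _ a1) as [e|]; auto.
  exfalso. assert (H := f_equal sz e). simpl in H. lia.
Qed.

Lemma op_yyy y : op y (Nd y y) = Nd y (Nd y y).
Proof.
  unfold op. destruct y as [|a1 [|a2 a3]]; auto.
  destruct (teq _ a1) as [e|]; auto.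
  exfalso. assert (H := f_equal sz e). simpl in H. lia.
Qed.

Lemma law1_op : law1 op.
Proof.
  intros x y. rewrite op_yy, op_yyy.
  assert (E : op x (Nd y (Nd y y)) = Nd x (Nd y (Nd y y))).
  { unfold op. destruct y as [|p q]; [reflexivity|].
    destruct (teq x (Nd p q)) as [e1|]; [|reflexivity].
    destruct (teq x p) as [e2|]; [|reflexivity].
    exfalso. subst. assert (H := f_equal sz e2). simpl in H. lia. }
  rewrite E. unfold op.
  destruct (teq y y); [|congruence]. reflexivity.
Qed.

Theorem mainTheorem9 :
  ~ (forall (M : Type) (op : M -> M -> M), law1 op -> law2 op).
Proof.
  intros H. specialize (H tree op law1_op Lf).
  vm_compute in H. discriminate H.
Qed.
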